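(* For any graph $G$, $\Gamma(G)\le\Gamma(G\uparrow\mathcal{B})$.
   Context: Graphs are finite and simple. A Grundy-coloring of $G$ is a proper coloring with nonempty color classes $C_1,\ldots,C_k$ such that for $i<j$ each vertex of $C_j$ has a neighbor in $C_i$; $\Gamma(G)$ is the maximum number of colors of a Grundy-coloring. A block of $G$ is a maximal 2-connected subgraph or a bridge (as a $K_2$). $G\uparrow\mathcal{B}$ is the graph on $V(G)$ obtained from $G$ by adding an edge between every two non-adjacent vertices that belong to a same block of $G$ (so every block becomes a clique). *)

(* Defs.v *)
(* A finite simple graph on vertex type T : finType is an
   irreflexive symmetric relation e : rel T. *)
From mathcomp Require Import all_boot.
Set Implicit Arguments. Unset Strict Implicit. Unset Printing Implicit Defensive.

Section Graphs.
Variable T : finType.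
Implicit Types (e : rel T) (S B : {set T}).

Definition induced e S : rel T := [rel x y | [&& e x y, x \in S & y \in S]].

Definition connectedb e S : bool :=
  [forall x in S, forall y in S, connect (induced e S) x y].

Definition two_connected e S : bool :=
  [&& 2 < #|S|, connectedb e S & [forall x in S, connectedb e (S :\ x)]].

Definition del_edge e (u v : T) : rel T :=
  [rel x y | e x y && ~~ ((x == u) && (y == v) || (x == v) && (y == u))].

Definition bridge e (u v : T) : bool := e u v && ~~ connect (del_edge e u v) u v.

Definition is_block e B : bool :=
  (two_connected e B && [forall B' : {set T}, (B \proper B') ==> ~~ two_connected e B'])
  || [exists u, exists v, (B == [set u; v]) && bridge e u v].

Definition up_block e : rel T :=
  [rel x y | e x y || ((x != y) && [exists B : {set T}, [&& is_block e B, x \in B & y \in B]])].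

(* Grundy colouring with k colours 1..k, as a map c : T -> 'I_(#|T|.+1)
   (a Grundy colouring has nonempty classes, so k <= #|T|). Class C_i = c^-1(i). *)
Definition grundy_coloring e (k : nat) (c : {ffun T -> 'I_(#|T|.+1)}) : bool :=
  [&& [forall x, 0 < c x <= k],
      [forall i : 'I_(#|T|.+1), (0 < i <= k) ==> [exists x, c x == i]],
      [forall x, forall y, e x y ==> (c x != c y)] &
      [forall x, forall i : 'I_(#|T|.+1), (0 < i < c x) ==> [exists y, e x y && (c y == i)]]].

Definition grundy_number e : nat :=
  \max_(k < #|T|.+1 | [exists c, grundy_coloring e k c]) k.

End Graphs.

(* Main.v *)
Require Import Defs.
From mathcomp Require Import all_boot.
Set Implicit Arguments. Unset Strict Implicit. Unset Printing Implicit Defensive.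

Section Greedy.
Variable T : finType.
Variable r : rel T.
Hypothesis rsym : symmetric r.
Hypothesis rirr : irreflexive r.

Definition PG1 (f : T -> nat) := forall x y, 0 < f x -> 0 < f y -> r x y -> f x != f y.
Definition PG2 (f : T -> nat) := forall x, 0 < f x -> forall i, 0 < i < f x -> exists y, r x y /\ f y = i.

Lemma greedy_aux n : forall f, #|[set x | f x == 0]| < n -> PG1 f -> PG2 f ->
  exists g, [/\ forall x, 0 < g x, PG1 g, PG2 g & forall x, 0 < f x -> g x = f x].
Proof.
elim: n => [//|n IH] f szf p1 p2.
case: (pickP [pred x | f x == 0]) => [u /= /eqP fu|none]; last first.
  exists f; split => // x; rewrite lt0n; apply/negP => /eqP fx.
  by move: (none x); rewrite /= fx eqxx.
pose P j := (0 < j) && [forall y, r u y ==> (f y != j)].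
have exP : exists j, P j.
  exists (\max_y f y).+1; rewrite /P /=; apply/forallP => y; apply/implyP => _.
  by rewrite neq_ltn ltnS leq_bigmax.
pose m := ex_minn exP.
have Pm : P m by rewrite /m; case: ex_minnP.
have mmin j : P j -> m <= j by rewrite /m; case: ex_minnP => ? _; apply.
move: Pm => /andP[m0 /forallP mavoid].
pose f' x := if x == u then m else f x.
have f'u : f' u = m by rewrite /f' eqxx.
have f'o x : x != u -> f' x = f x by rewrite /f'; case: eqP.
have [g [g0 g1 g2 gf]] : exists g, [/\ forall x, 0 < g x, PG1 g, PG2 g & forall x, 0 < f' x -> g x = f' x].
  apply: IH.
  - suff : [set x | f' x == 0] \proper [set x | f x == 0].
      by move/proper_card => H; apply: (leq_trans H).
    apply/properP; split.
      apply/subsetP => x; rewrite !inE /f'; case: (eqVneq x u) => [->|//]; by rewrite fu.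
    by exists u; rewrite !inE ?fu // f'u -lt0n.
  - move=> x y; case: (eqVneq x u) => [->|xu]; case: (eqVneq y u) => [->|yu].
    + by rewrite rirr.
    + rewrite f'u (f'o _ yu) => _ fy ruy; move/implyP: (mavoid y); rewrite eq_sym; apply => //.
    + rewrite f'u (f'o _ xu) => fx _ rxu; move/implyP: (mavoid x); apply; by rewrite rsym.
    + by rewrite (f'o _ xu) (f'o _ yu); apply: p1.
  - move=> x; case: (eqVneq x u) => [->|xu].
      rewrite f'u => _ i /andP[i0 im].
      have : ~~ P i by apply/negP => /mmin; rewrite leqNgt im.
      rewrite /P i0 /= negb_forall => /existsP[y]; rewrite negb_imply negbK => /andP[ruy /eqP fy].
      exists y; split => //; rewrite f'o ?fy //; apply/eqP => yu.
      by move: fy; rewrite yu fu => i0'; move: i0; rewrite -i0'.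
    rewrite (f'o _ xu) => fx i im.
    have [y [rxy fy]] := p2 x fx i im.
    exists y; split => //; rewrite f'o // ; apply/eqP => yu; move: fy im; rewrite yu fu => <-.
    by [].
exists g; split => // x fx; rewrite gf; rewrite f'o //; last by apply/eqP => xu; move: fx; rewrite xu fu.
by apply/eqP => xu; move: fx; rewrite xu fu.
Qed.

Lemma greedy f : PG1 f -> PG2 f ->
  exists g, [/\ forall x, 0 < g x, PG1 g, PG2 g & forall x, 0 < f x -> g x = f x].
Proof. by apply: (@greedy_aux #|[set x | f x == 0]|.+1). Qed.

Lemma PG_bound g : PG2 g -> forall x, 0 < g x -> g x <= #|T|.
Proof.
move=> g2 x gx.
pose h (i : 'I_(g x)) := if i.+1 == g x then x else odflt x [pick y | g y == i.+1].
have hP (i : 'I_(g x)) : g (h i) = i.+1.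
  rewrite /h; case: eqP => [-> //|ne].
  case: pickP => [y /eqP //|none] /=.
  have ilt : 0 < i.+1 < g x by apply/andP; split => //; rewrite ltn_neqAle ltn_ord andbT; apply/eqP.
  have [y [_ gy]] := g2 x gx i.+1 ilt.
  by move: (none y); rewrite gy eqxx.
have := leq_card h; rewrite card_ord; apply => i j hij.
by apply: val_inj; apply/eqP; rewrite -eqSS -(hP i) -(hP j) hij.
Qed.

End Greedy.

Section G.
Variable T : finType.
Variable e : rel T.
Hypothesis esym : symmetric e.
Hypothesis eirr : irreflexive e.
Implicit Types (S A B K C : {set T}) (a b x y z u v w t : T).

Lemma conn_ind (r : rel T) (P : T -> Prop) x :
  P x -> (forall a b, P a -> r a b -> P b) -> forall y, connect r x y -> P y.
Proof.
move=> Px step y /connectP [p]; elim: p x Px => [|a p IH] x Px /=; first by move=> _ ->.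
by case/andP=> rxa pa yl; apply: (IH a (step _ _ Px rxa) pa yl).
Qed.

Lemma induced_sym S : symmetric (induced e S).
Proof. move=> x y; rewrite /induced /= esym; by case: (e y x); case: (x \in S); case: (y \in S). Qed.

Lemma connI_sym S a b : connect (induced e S) a b = connect (induced e S) b a.
Proof. by apply: sym_connect_sym; apply: induced_sym. Qed.

Lemma conn_in S a b : connect (induced e S) a b -> a \in S -> b \in S.
Proof.
move=> C aS; apply: (conn_ind (P := fun t => t \in S)) aS _ b C.
by move=> u w _ /= /and3P[].
Qed.

Lemma conn_mono S1 S2 a b : S1 \subset S2 ->
  connect (induced e S1) a b -> connect (induced e S2) a b.
Proof.
move=> sub; apply: connect_sub => u w /= /and3P[euw uS wS].
by apply: connect1; rewrite /induced /= euw (subsetP sub _ uS) (subsetP sub _ wS).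
Qed.

Lemma conn_edge S a b : e a b -> a \in S -> b \in S -> connect (induced e S) a b.
Proof. by move=> eab aS bS; apply: connect1; rewrite /induced /= eab aS bS. Qed.


Lemma connb_base S r0 : (forall w, w \in S -> connect (induced e S) r0 w) -> connectedb e S.
Proof.
move=> H; apply/forall_inP => x xS; apply/forall_inP => y yS.
by apply: (connect_trans (y := r0)); [rewrite connI_sym|]; apply: H.
Qed.

Lemma connb_use S x y : connectedb e S -> x \in S -> y \in S -> connect (induced e S) x y.
Proof. by move=> /forall_inP H xS yS; move/forall_inP: (H x xS); apply. Qed.

Lemma first_hit S B z t : z \notin B -> t \in B -> connect (induced e S) z t ->
  exists k b, [/\ connect (induced e (~: B)) z k, b \in B, b \in S & e k b].
Proof.
move=> zB tB C.
pose P s := connect (induced e (~: B)) z s \/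
        exists k b, [/\ connect (induced e (~: B)) z k, b \in B, b \in S & e k b].
have : P t.
  apply: (conn_ind (P := P) (or_introl (connect0 _ z))) C.
  move=> a b' [Ca|] /=; last by right.
  move=> /and3P[eab aS bS].
  case bB: (b' \in B); first by right; exists a, b'.
  left; apply: (connect_trans Ca); apply: conn_edge => //.
    by have := conn_in Ca; rewrite !inE; apply.
  by rewrite inE bB.
case => //.
by move=> /conn_in; rewrite !inE tB => /(_ zB).
Qed.

Lemma ear_aux n : forall B K a1 a2 k1 k2, #|K| < n ->
  two_connected e B -> K \subset ~: B -> connectedb e K -> a1 != a2 ->
  a1 \in B -> a2 \in B -> k1 \in K -> k2 \in K -> e k1 a1 -> e k2 a2 ->
  exists B', (B \proper B') && two_connected e B'.
Proof.
elim: n => [//|n IH] B K a1 a2 k1 k2 cK tcB KB cbK a12 a1B a2B k1K k2K e1 e2.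
have KnB t : t \in K -> t \notin B by move=> tK; have := subsetP KB t tK; rewrite inE.
move: (tcB) => /and3P[szB cbB /forall_inP cbBu].
set U := B :|: K.
have BU : B \subset U by apply: subsetUl.
have KU : K \subset U by apply: subsetUr.
case: (boolP [forall u in K, forall w in K :\ u, connect (induced e (U :\ u)) w a1]).
  move=> /forall_inP Hall.
  exists U; apply/andP; split.
    apply/properP; split => //; exists k1; first by rewrite inE k1K orbT.
    exact: KnB.
  apply/and3P; split.
  - by apply: (leq_trans szB); apply: subset_leq_card.
  - apply: (connb_base (r0 := a1)) => w; rewrite inE => /orP[wB|wK].
      by apply: (conn_mono BU); apply: connb_use.
    apply: (connect_trans (y := k1)).
      by apply: conn_edge; [rewrite esym| rewrite inE a1B| rewrite inE k1K orbT].
    by apply: (conn_mono KU); apply: connb_use.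
  - apply/forall_inP => u; rewrite inE => /orP[uB|uK].
      have [aj [kj [ajB aju kjK ejj]]] : exists aj kj, [/\ aj \in B, aj != u, kj \in K & e kj aj].
        case: (eqVneq a1 u) => [a1u|a1u]; last by exists a1, k1.
        by exists a2, k2; split => //; rewrite -a1u eq_sym.
      have BuU : B :\ u \subset U :\ u by apply: setSD.
      have KUu : K \subset U :\ u.
        apply/subsetP => t tK; rewrite !inE tK orbT andbT.
        by apply/eqP => tu; move: (KnB t tK); rewrite tu uB.
      apply: (connb_base (r0 := aj)) => w; rewrite !inE => /andP[wu /orP[wB|wK]].
        apply: (conn_mono BuU); apply: connb_use; rewrite ?inE ?wu ?wB ?aju ?ajB //.
        exact: cbBu.
      apply: (connect_trans (y := kj)).
        by apply: conn_edge; [rewrite esym| rewrite !inE aju ajB | rewrite (subsetP KUu)].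
      by apply: (conn_mono KUu); apply: connb_use.
    have uB : u \notin B by apply: KnB.
    have BUu : B \subset U :\ u.
      apply/subsetP => t tB; rewrite !inE tB andbT.
      by apply/eqP => tu; move: uB; rewrite -tu tB.
    apply: (connb_base (r0 := a1)) => w; rewrite !inE => /andP[wu /orP[wB|wK]].
      by apply: (conn_mono BUu); apply: connb_use.
    rewrite connI_sym; move/forall_inP: (Hall u uK); apply.
    by rewrite !inE wu wK.
rewrite negb_forall_in => /existsP[u /andP[uK]].
rewrite negb_forall_in => /existsP[w /andP[wKu nC]].
have uB : u \notin B by apply: KnB.
have BUu : B \subset U :\ u.
  apply/subsetP => t tB; rewrite !inE tB andbT.
  by apply/eqP => tu; move: uB; rewrite -tu tB.
set C := [set t | connect (induced e (U :\ u)) w t].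
have wUu : w \in U :\ u by move: wKu; rewrite !inE => /andP[-> ->]; rewrite orbT.
have CUu t : t \in C -> t \in U :\ u by rewrite inE => /conn_in; apply.
have CB t : t \in C -> t \notin B.
  rewrite inE => Ct; apply/negP => tB; move/negP: nC; apply.
  apply: (connect_trans Ct); apply: (conn_mono BUu); apply: connb_use => //.
have kC t a : t \in K -> a \in B -> e t a -> t \notin C.
  move=> tK aB eta; apply/negP => tC; suff : a \in C by move/CB; rewrite aB.
  rewrite inE; apply: (connect_trans (y := t)); first by move: tC; rewrite inE.
  by apply: conn_edge => //; [apply: CUu|apply: (subsetP BUu)].
set K2 := K :\: C.
have K2K : K2 \subset K by apply: subsetDl.
have uK2 : u \in K2.
  rewrite in_setD uK andbT; apply/negP => /CUu; by rewrite !inE eqxx.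
have k1K2 : k1 \in K2 by rewrite in_setD k1K andbT (kC _ a1).
have k2K2 : k2 \in K2 by rewrite in_setD k2K andbT (kC _ a2).
have szK2 : #|K2| < #|K|.
  apply: proper_card; apply/properP; split => //; exists w.
    by move: wKu; rewrite inE => /andP[].
  by rewrite inE inE connect0.
apply: (IH B K2 a1 a2 k1 k2) => //.
- by apply: (leq_trans szK2).
- by apply: (subset_trans K2K).
apply: (connb_base (r0 := u)) => t tK2; rewrite connI_sym.
have tK : t \in K by apply: (subsetP K2K).
have : connect (induced e K2) t u \/ connect (induced e K2) t u; last by case.
apply: (conn_ind (P := fun s => connect (induced e K2) t s \/ connect (induced e K2) t u)
  (or_introl (connect0 _ t)) _ (connb_use cbK tK uK)).
move=> s s' [Cs|] /=; last by right.
move=> /and3P[ess' sK s'K].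
have sK2 := conn_in Cs tK2.
case: (eqVneq s u) => [su|su]; first by right; rewrite -su.
left; apply: (connect_trans Cs); apply: conn_edge => //.
rewrite in_setD s'K andbT; apply/negP => s'C.
move: sK2; rewrite in_setD => /andP[/negP sC _]; apply: sC.
rewrite inE; apply: (connect_trans (y := s')); first by move: s'C; rewrite inE.
by apply: conn_edge; [rewrite esym | apply: CUu | rewrite !inE su sK orbT].
Qed.


Lemma ear B K a1 a2 k1 k2 :
  two_connected e B -> K \subset ~: B -> connectedb e K -> a1 != a2 ->
  a1 \in B -> a2 \in B -> k1 \in K -> k2 \in K -> e k1 a1 -> e k2 a2 ->
  exists B', (B \proper B') && two_connected e B'.
Proof. by apply: (@ear_aux #|K|.+1). Qed.

Lemma comp_connb A z : connectedb e [set k | connect (induced e A) z k].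
Proof.
apply: (connb_base (r0 := z)) => w; rewrite inE => Czw.
apply: (conn_ind (P := fun s => connect (induced e [set k | connect (induced e A) z k]) z s)
   (connect0 _ z)) Czw => s s' Cs /and3P[ess' sA s'A].
have Czs : connect (induced e A) z s.
  have : s \in [set k | connect (induced e A) z k].
    by apply: (conn_in Cs); rewrite inE connect0.
  by rewrite inE.
apply: (connect_trans Cs); apply: conn_edge => //; rewrite inE //.
by apply: (connect_trans Czs); apply: conn_edge.
Qed.

Definition maxl B := forall B', B \proper B' -> ~~ two_connected e B'.

Lemma block_cases B : is_block e B ->
  (two_connected e B /\ maxl B) \/ exists p q, B = [set p; q] /\ e p q.
Proof.
case/orP => [/andP[tc /forallP mx]|/existsP[p /existsP[q /andP[/eqP-> /andP[epq _]]]]].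
  by left; split => // B' pB'; move/implyP: (mx B'); apply.
by right; exists p, q.
Qed.

Lemma pair_edge p q x y : e p q -> x \in [set p; q] -> y \in [set p; q] -> x != y -> e x y.
Proof.
move=> epq; rewrite !inE => /orP[]/eqP-> /orP[]/eqP->; rewrite ?eqxx //.
by rewrite esym.
Qed.

Lemma tc_minus B a : two_connected e B -> connectedb e (B :\ a).
Proof.
case/and3P => _ cb /forall_inP H.
case aB: (a \in B); first exact: H.
suff -> : B :\ a = B by [].
apply/setP => t; rewrite !inE; case: eqP => // ->; by rewrite aB.
Qed.

Lemma up_block_in B x y : is_block e B -> x \in B -> y \in B -> x != y -> up_block e x y.
Proof.
move=> bB xB yB xy; rewrite /up_block /= xy /=; apply/orP; right.
by apply/existsP; exists B; rewrite bB xB yB.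
Qed.

Lemma key B x y z :
  is_block e B -> two_connected e B -> maxl B -> x \in B -> y \in B -> x != y ->
  connect (induced e (~: [set y])) z x -> up_block e z y -> z != x -> up_block e z x.
Proof.
move=> bB tcB mxB xB yB xy Czx Hzy zx.
case zB: (z \in B); first by apply: (up_block_in bB).
exfalso.
have zB' : z \notin B by rewrite zB.
have [k1 [a1 [Ck1 a1B a1Y e1]]] := first_hit zB' xB Czx.
have a1y : a1 != y by move: a1Y; rewrite !inE.
have [k2 [a2 [Ck2 a2B a12 e2]]] : exists k b, [/\ connect (induced e (~: B)) z k, b \in B,
     a1 != b & e k b].
  have direct : e z y -> exists k b, [/\ connect (induced e (~: B)) z k, b \in B, a1 != b & e k b].
    by move=> ezy; exists z, y; split; rewrite ?connect0 // eq_sym.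
  move: Hzy; rewrite /up_block /= => /orP[/direct //|/andP[zy /existsP[B' /and3P[bB' zB'' yB']]]].
  case: (block_cases bB') => [[tcB' _]|[p [q [Bpq epq]]]]; last first.
    by rewrite Bpq in zB'' yB'; apply: direct; apply: (pair_edge epq).
  have za1 : z != a1 by apply/eqP => za; move: zB; rewrite za a1B.
  have Czy : connect (induced e (B' :\ a1)) z y.
    by apply: connb_use; [apply: tc_minus|rewrite !inE za1|rewrite !inE (eq_sym y) a1y].
  have [k [b [Ck bB2 bS eb]]] := first_hit zB' yB Czy.
  exists k, b; split => //; move: bS; rewrite !inE eq_sym; by case/andP.
set K := [set k | connect (induced e (~: B)) z k].
have KB : K \subset ~: B.
  apply/subsetP => t; rewrite inE => /conn_in; apply; by rewrite inE.
have [B2 /andP[pB2 tcB2]] := ear tcB KB (comp_connb _ _) a12 a1B a2B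
   (k1 := k1) (k2 := k2) ltac:(by rewrite inE) ltac:(by rewrite inE) e1 e2.
by move: (mxB B2 pB2); rewrite tcB2.
Qed.


Variable k : nat.
Variable c : {ffun T -> 'I_(#|T|.+1)}.
Hypothesis hc : grundy_coloring e k c.
Variable v : T.

Local Notation H := (up_block e).

Lemma c_pos x : 0 < c x.
Proof. by case/and4P: hc => /forallP /(_ x) /andP[]. Qed.

Lemma c_prop x y : e x y -> c x != c y.
Proof. by case/and4P: hc => _ _ /forallP /(_ x) /forallP /(_ y) /implyP. Qed.

Lemma c_sup x i : 0 < i < c x -> exists y, e x y /\ c y = i :> nat.
Proof.
case/and4P: hc => _ _ _ /forallP /(_ x) /forallP Hx ii.
have iT : i < #|T|.+1 by apply: (leq_trans _ (ltn_ord (c x))); case/andP: ii => _ /ltnW.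
move/implyP: (Hx (Ordinal iT)) => /(_ ii) /existsP[y /andP[exy /eqP cy]].
by exists y; rewrite cy.
Qed.

Lemma H_e x y : e x y -> H x y.
Proof. by rewrite /up_block /= => ->. Qed.

Lemma H_irr x : ~~ H x x.
Proof. by rewrite /up_block /= eirr eqxx. Qed.

Lemma H_sym : symmetric H.
Proof.
move=> x y; rewrite /up_block /= esym eq_sym; congr (_ || (_ && _)).
by apply/existsP/existsP => [][B /and3P[? ? ?]]; exists B; apply/and3P.
Qed.

Definition sc S := v \in S /\ forall x, x \in S -> forall i, 0 < i < c x ->
  exists y, [/\ y \in S, H x y & c y = i :> nat].

Definition properc S := [forall x in S, forall y in S, H x y ==> (c x != c y)].

Definition Rset A := [set w | connect (induced e A) v w].

Lemma sc_T : sc setT.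
Proof.
split; first by rewrite inE.
move=> x _ i /c_sup [y [exy cy]]; exists y; split; [by rewrite inE|exact: H_e|by []].
Qed.

Lemma Sep A z w : (forall B, two_connected e B -> connectedb e (B :&: A)) ->
  v \in A -> z \in Rset A -> H z w -> w \in A -> w \in Rset A.
Proof.
move=> hA vA; rewrite !inE => Cz Hzw wA.
have zA := conn_in Cz vA.
apply: (connect_trans Cz).
move: Hzw; rewrite /up_block /= => /orP[ezw|/andP[zw /existsP[B /and3P[bB zB wB]]]].
  exact: conn_edge.
case: (block_cases bB) => [[tcB _]|[p [q [Bpq epq]]]].
  apply: (conn_mono (S1 := B :&: A)); first by apply: subsetIr.
  by apply: connb_use; [apply: hA|rewrite inE zB|rewrite inE wB].
by rewrite Bpq in zB wB; apply: conn_edge => //; apply: (pair_edge epq).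
Qed.

Lemma hA1 y B : two_connected e B -> connectedb e (B :&: ~: [set y]).
Proof. by rewrite -setDE; apply: tc_minus. Qed.

Lemma hAT B : two_connected e B -> connectedb e (B :&: setT).
Proof. by rewrite setIT => /and3P[]. Qed.


Lemma stepA S B x y : sc S -> is_block e B -> two_connected e B -> maxl B ->
  x \in B -> y \in B -> x != y -> c x = c y -> x \in S -> y \in S ->
  y != v -> x \in Rset (~: [set y]) ->
  exists S', sc S' /\ #|S'| < #|S|.
Proof.
move=> [vS scS] bB tcB mxB xB yB xy cxy xS yS yv xR.
have vY : v \in ~: [set y] by rewrite !inE eq_sym.
exists (S :&: Rset (~: [set y])); split.
  split; first by rewrite inE vS inE connect0.
  move=> z; rewrite inE => /andP[zS zR] i ii.
  have [w [wS Hzw cw]] := scS z zS i ii.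
  case: (eqVneq w y) => [wy|wy].
    exists x; split; first by rewrite inE xS xR.
      apply: (key bB tcB mxB xB yB xy) => //.
        move: zR xR; rewrite !inE => Cz Cx.
        by apply: (connect_trans (y := v)); [rewrite connI_sym|].
      by rewrite -wy.
      apply/eqP => zx; move: ii; rewrite zx cxy -wy cw ltnn.
      by case/andP.
    by rewrite cxy -wy.
  exists w; split => //; rewrite in_setI wS /=.
  by apply: (Sep (hA1 y) vY zR Hzw); rewrite !inE.
apply: proper_card; apply/properP; split; first by apply: subsetIl.
exists y => //; rewrite !inE yS /=; apply/negP => /conn_in /(_ vY).
by rewrite !inE eqxx.
Qed.

Lemma invariant x y t : x != v -> y != v -> x != y ->
  connect (induced e setT) v t ->
  [\/ t \in Rset (~: [set x; y]), x \in Rset (~: [set y]) | y \in Rset (~: [set x])].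
Proof.
move=> xv yv xy C.
apply: (conn_ind (P := fun t => [\/ t \in Rset (~: [set x; y]), x \in Rset (~: [set y]) | y \in Rset (~: [set x])]) _ _ C).
  by apply: Or31; rewrite inE connect0.
move=> a b [aR|?|?] eab; [|by apply: Or32|by apply: Or33].
move: eab => /and3P[eab _ _].
have vXY : v \in ~: [set x; y] by rewrite !inE negb_or !(eq_sym v) xv yv.
move: aR; rewrite inE => aR.
have aXY := conn_in aR vXY.
case: (eqVneq b x) => [bx|bx].
  apply: Or32; rewrite inE; apply: (connect_trans (conn_mono _ aR)).
    by apply/subsetP => t'; rewrite !inE negb_or => /andP[].
  apply: conn_edge; rewrite -?bx //; first by move: aXY; rewrite !inE negb_or => /andP[].
  by rewrite !inE bx.
case: (eqVneq b y) => [bY|bY].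
  apply: Or33; rewrite inE; apply: (connect_trans (conn_mono _ aR)).
    by apply/subsetP => t'; rewrite !inE negb_or => /andP[].
  apply: conn_edge; rewrite -?bY //; first by move: aXY; rewrite !inE negb_or => /andP[].
  by rewrite !inE bY eq_sym.
apply: Or31; rewrite inE; apply: (connect_trans aR); apply: conn_edge => //.
by rewrite !inE negb_or bx bY.
Qed.

Lemma step S x y : sc S -> x \in S -> y \in S -> H x y -> c x = c y ->
  exists S', sc S' /\ #|S'| < #|S|.
Proof.
move=> scS xS yS Hxy cxy.
have xy : x != y by apply/eqP => exy; move: Hxy; rewrite exy (negbTE (H_irr y)).
have nexy : ~~ e x y by apply/negP => /c_prop; rewrite cxy eqxx.
move: (Hxy); rewrite /up_block /= (negbTE nexy) /= => /andP[_ /existsP[B /and3P[bB xB yB]]].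
case: (block_cases bB) => [[tcB mxB]|[p [q [Bpq epq]]]]; last first.
  by move: nexy; rewrite Bpq in xB yB; rewrite (pair_edge epq).
case: (boolP ((y != v) && (x \in Rset (~: [set y])))) => [/andP[yv xR]|nA].
  exact: (stepA scS bB tcB mxB xB yB xy cxy xS yS yv xR).
case: (boolP ((x != v) && (y \in Rset (~: [set x])))) => [/andP[xv yR]|nB].
  by apply: (stepA scS bB tcB mxB yB xB _ _ yS xS xv yR); rewrite 1?eq_sym.
have vR A : v \in Rset A by rewrite inE connect0.
have xv : x != v.
  apply/eqP => xv; move: nA; rewrite xv vR andbT negbK => /eqP yv.
  by move: xy; rewrite xv yv eqxx.
have yv : y != v.
  apply/eqP => yv; move: nB; rewrite yv vR andbT negbK => /eqP xv'.
  by move: xy; rewrite yv xv' eqxx.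
move: nA nB; rewrite yv xv /= => nA nB.
have xT : x \notin Rset setT.
  rewrite inE; apply/negP => /(invariant xv yv xy) [|| ]; last 2 first.
    by rewrite (negbTE nA).
    by rewrite (negbTE nB).
  by rewrite inE => /conn_in; rewrite !inE eqxx /= negb_or !(eq_sym v) xv yv => /(_ isT).
case: scS => vS scS.
exists (S :&: Rset setT); split.
  split; first by rewrite inE vS inE connect0.
  move=> z; rewrite inE => /andP[zS zR] i ii.
  have [w [wS Hzw cw]] := scS z zS i ii.
  exists w; split => //; rewrite in_setI wS /=.
  by apply: (Sep hAT (in_setT v) zR Hzw (in_setT w)).
apply: proper_card; apply/properP; split; first by apply: subsetIl.
by exists x => //; rewrite inE (negbTE xT) andbF.
Qed.

Lemma reduce n : forall S, #|S| < n -> sc S -> exists S', sc S' /\ properc S'.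
Proof.
elim: n => [//|n IH] S szS scS.
case: (boolP (properc S)) => [pS|]; first by exists S.
rewrite /properc negb_forall_in => /existsP[x /andP[xS]].
rewrite negb_forall_in => /existsP[y /andP[yS]].
rewrite negb_imply negbK => /andP[Hxy /eqP cxy].
have [S' [scS' sz']] := step scS xS yS Hxy cxy.
by apply: (IH S') => //; apply: (leq_trans sz').
Qed.

Lemma final : c v = k :> nat -> k <= grundy_number H.
Proof.
move=> cvk.
have [S [[vS scS] pS]] := @reduce #|[set: T]|.+1 setT (ltnSn _) sc_T.
pose f x := if x \in S then (c x : nat) else 0.
have fS x : 0 < f x -> x \in S by rewrite /f; case: (x \in S).
have fE x : x \in S -> f x = c x by rewrite /f => ->.
have p1 : PG1 H f.
  move=> x y /fS xS /fS yS Hxy; rewrite !fE //.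
  move/forall_inP: pS => /(_ x xS) /forall_inP /(_ y yS) /implyP /(_ Hxy).
  by rewrite -(inj_eq val_inj).
have p2 : PG2 H f.
  move=> x /fS xS i; rewrite fE // => ii.
  have [y [yS Hxy cy]] := scS x xS i ii.
  by exists y; rewrite fE.
have Hirr : irreflexive H by move=> x; apply: negbTE; apply: H_irr.
have [g [g0 g1 g2 gf]] := greedy H_sym Hirr p1 p2.
have gv : g v = k by rewrite gf fE // -?cvk // c_pos.
have gb x : g x <= #|T| by apply: (PG_bound g2).
case: (@arg_maxnP T v xpredT g isT) => x0 _ gmax0.
have gmax x : g x <= g x0 by apply: (gmax0 x).
pose c' := [ffun x => inord (g x) : 'I_#|T|.+1].
have c'E x : c' x = g x :> nat by rewrite ffunE inordK // ltnS.
have gc : grundy_coloring H (g x0) c'.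
  apply/and4P; split.
  - by apply/forallP => x; rewrite c'E g0 gmax.
  - apply/forallP => i; apply/implyP => /andP[i0 ile].
    case: (ltngtP i (g x0)) => [ilt|igt|ieq]; last 2 first.
    - by move: ile; rewrite leqNgt igt.
    - by apply/existsP; exists x0; rewrite -(inj_eq val_inj) /= c'E ieq.
      have [y [_ gy]] := g2 x0 (g0 x0) i ltac:(by rewrite i0 ilt).
    by apply/existsP; exists y; rewrite -(inj_eq val_inj) /= c'E gy.
  - apply/forallP => x; apply/forallP => y; apply/implyP => Hxy.
    by rewrite -(inj_eq val_inj) /= !c'E; apply: g1.
  - apply/forallP => x; apply/forallP => i; apply/implyP; rewrite c'E => ii.
    have [y [Hxy gy]] := g2 x (g0 x) i ii.
    by apply/existsP; exists y; rewrite Hxy -(inj_eq val_inj) /= c'E gy.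
have hP : [exists c, grundy_coloring H (inord (g x0) : 'I_#|T|.+1) c].
  by apply/existsP; exists c'; rewrite inordK ?ltnS.
have : nat_of_ord (inord (g x0) : 'I_#|T|.+1) <= grundy_number H :=
  @leq_bigmax_cond _ (fun i : 'I_#|T|.+1 => [exists c, grundy_coloring H i c])
   (fun i => nat_of_ord i) _ hP.
rewrite inordK ?ltnS //.
by apply: leq_trans; rewrite -gv gmax.
Qed.

End G.

Theorem proposition7 (T : finType) (e : rel T) (e_sym : symmetric e) (e_irr : irreflexive e) :
  grundy_number e <= grundy_number (up_block e).
Proof.
case: (pickP (fun i : 'I_#|T|.+1 => [exists c, grundy_coloring e i c])) => [i0 Pi0|none];
  last by rewrite /grundy_number big_pred0.
rewrite /grundy_number (bigmax_eq_arg i0 Pi0).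
case: (@arg_maxnP _ i0 (fun i : 'I_#|T|.+1 => [exists c, grundy_coloring e i c]) (fun i => nat_of_ord i) Pi0).
move=> i /existsP[c hc] _.
case: (posnP i) => [->//|ipos].
have := hc; case/and4P => _ /forallP /(_ i) /implyP /(_ ltac:(by rewrite ipos leqnn)) /existsP[v /eqP cv] _ _.
by apply: (final e_sym e_irr hc (v := v)); rewrite cv.
Qed.
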